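(* Every finite connected graph that is both geodetic and ptolemaic is diagonal.
   Context: $d$ denotes shortest-path distance. A graph is geodetic if between any two vertices there is exactly one shortest path. It is ptolemaic if $d(x,y)d(z,w)+d(y,z)d(x,w)\ge d(x,z)d(y,w)$ for all vertices $x,y,z,w$. For vertices $x_0,\dots,x_k$ put $\ell(x_0,\dots,x_k)=\sum_{i=0}^{k-1}d(x_i,x_{i+1})$. The magnitude chain complex: $\mathrm{MC}_{k,l}(G)$ is the free abelian group on $I_{k,l}(G)=\{(x_0,\dots,x_k)\in V(G)^{k+1}: x_i\neq x_{i+1}\ \forall i,\ \ell=l\}$, with differential $\partial=\sum_{i=1}^{k-1}(-1)^i\partial_i$, where $\partial_i$ deletes $x_i$ if this does not change $\ell$ and is $0$ otherwise. Magnitude homology: $\mathrm{MH}_{k,l}(G)=H_k(\mathrm{MC}_{*,l}(G))$. $G$ is diagonal if $\mathrm{MH}_{k,l}(G)=0$ whenever $k\ne l$. *)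

(* Defs.v *)
From HB Require Import structures.
From mathcomp Require Import all_boot all_order all_algebra.
Set Implicit Arguments. Unset Strict Implicit. Unset Printing Implicit Defensive.
Import GRing.Theory Num.Theory.

(* A finite simple graph: vertex type T : finType, adjacency e : rel T,
   assumed symmetric and irreflexive in the theorem. *)

Definition walkn (T : finType) (e : rel T) (n : nat) (x y : T) : bool :=
  [exists p : n.-tuple T, path e x p && (last x p == y)].

(* shortest-path distance: least n with a walk of length n from x to y
   (searching n < #|T|, which suffices for connected graphs) *)
Definition dist (T : finType) (e : rel T) (x y : T) : nat :=
  find (fun n => walkn e n x y) (iota 0 #|T|).

(* p (the vertices after x) is a shortest path from x to y *)
Definition geodesic (T : finType) (e : rel T) (x y : T) (p : seq T) : bool :=
  [&& path e x p, last x p == y & size p == dist e x y].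

Definition geodetic (T : finType) (e : rel T) : Prop :=
  forall x y : T, exists p : seq T,
    geodesic e x y p /\ forall q : seq T, geodesic e x y q -> q = p.

Definition ptolemaic (T : finType) (e : rel T) : Prop :=
  forall x y z w : T,
    dist e x z * dist e y w <= dist e x y * dist e z w + dist e y z * dist e x w.

Definition ell (T : finType) (e : rel T) (s : seq T) : nat :=
  sumn [seq dist e p.1 p.2 | p <- zip s (behead s)].

Definition inI (T : finType) (e : rel T) (l : nat) (s : seq T) : bool :=
  all (fun p => p.1 != p.2) (zip s (behead s)) && (ell e s == l).

Definition delete (T : Type) (i : nat) (s : seq T) : seq T :=
  take i s ++ drop i.+1 s.

(* coefficient of generator y in the boundary of generator x (x has k+1 entries):
   sum_{i=1}^{k-1} (-1)^i [partial_i x = y] where partial_i x = delete i x if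
   this preserves ell, and 0 otherwise. *)
Definition face_coef (T : finType) (e : rel T) (k : nat)
    (x : k.+1.-tuple T) (y : k.-tuple T) : int :=
  (\sum_(1 <= i < k)
     (if (delete i (tval x) == tval y) && (ell e (delete i (tval x)) == ell e (tval x))
      then (-1) ^+ i else 0))%R.

(* chains in MC_k are integer functions on (k+1)-tuples; the differential *)
Definition bd (T : finType) (e : rel T) (k : nat)
    (c : {ffun k.+1.-tuple T -> int}) : {ffun k.-tuple T -> int} :=
  [ffun y => (\sum_(x : k.+1.-tuple T) c x * face_coef e x y)%R].

Definition inMC (T : finType) (e : rel T) (k l : nat)
    (c : {ffun k.+1.-tuple T -> int}) : Prop :=
  forall x, c x != 0%R -> inI e l (tval x).

Definition MH_vanishes (T : finType) (e : rel T) (k l : nat) : Prop :=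
  forall c : {ffun k.+1.-tuple T -> int},
    inMC e l c -> bd e c = 0%R ->
    exists b : {ffun k.+2.-tuple T -> int}, inMC e l b /\ bd e b = c.

Definition diagonal (T : finType) (e : rel T) : Prop :=
  forall k l : nat, k != l -> MH_vanishes e k l.

(* Main.v *)
Require Import Defs.
From HB Require Import structures.
From mathcomp Require Import all_boot all_order all_algebra.
From mathcomp Require Import zify.
Set Implicit Arguments. Unset Strict Implicit. Unset Printing Implicit Defensive.
Import GRing.Theory Num.Theory.

Section Metric.
Variables (T : finType) (e : rel T).
Hypothesis e_sym : symmetric e.
Hypothesis e_irr : irreflexive e.
Hypothesis e_conn : forall x y : T, connect e x y.
Hypothesis Hgeo : geodetic e.
Hypothesis Hpto : ptolemaic e.

Local Notation d := (dist e).

Lemma walknP n x y :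
  reflect (exists p : seq T, [/\ size p = n, path e x p & last x p = y]) (walkn e n x y).
Proof.
apply: (iffP existsP) => [[p /andP[pp /eqP lp]]|[p [sp pp lp]]].
  by exists (tval p); rewrite size_tuple.
have sp' : size p == n by rewrite sp.
by exists (Tuple sp'); rewrite /= pp lp eqxx.
Qed.

Lemma dist_walk x y : d x y < #|T| /\ walkn e (d x y) x y.
Proof.
have [p pp lp] := connectP (e_conn x y).
rewrite lp; case: (shortenP pp) => p' pp' up' _.
have szp : size p' < #|T|.
  by have := max_card (mem (x :: p')); rewrite (card_uniqP up').
have hw : walkn e (size p') x (last x p') by apply/walknP; exists p'.
have hh : has (fun n => walkn e n x (last x p')) (iota 0 #|T|).
  by apply/hasP; exists (size p') => //; rewrite mem_iota.
have hf := hh; rewrite has_find size_iota in hf.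
rewrite /dist; split => //.
by have := nth_find 0 hh; rewrite nth_iota // add0n.
Qed.

Lemma dist_le n x y : walkn e n x y -> d x y <= n.
Proof.
move=> w; case: (ltnP n #|T|) => hn; last first.
  by have [h _] := dist_walk x y; apply: leq_trans (ltnW h) hn.
rewrite leqNgt; apply/negP => lt.
by have := before_find 0 lt; rewrite nth_iota // add0n w.
Qed.

Lemma walk_cat a b x y z : walkn e a x y -> walkn e b y z -> walkn e (a + b) x z.
Proof.
move=> /walknP[p [sp pp lp]] /walknP[q [sq pq lq]]; apply/walknP.
by exists (p ++ q); rewrite size_cat sp sq cat_path last_cat pp lp pq lq.
Qed.

Lemma dist_tri x y z : d x z <= d x y + d y z.
Proof.
apply: dist_le; apply: (@walk_cat _ _ _ y).
  by case: (dist_walk x y).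
by case: (dist_walk y z).
Qed.

Lemma walk_sym n x y : walkn e n x y -> walkn e n y x.
Proof.
move=> /walknP[p [sp pp lp]]; apply/walknP.
exists (rev (belast x p)); rewrite size_rev size_belast sp; split => //.
  rewrite -lp rev_path; apply: sub_path pp => u v; by rewrite e_sym.
case: p sp pp lp => [|a p] _ _ /= <- //.
by rewrite rev_cons last_rcons.
Qed.

Lemma dist_sym x y : d x y = d y x.
Proof.
apply/eqP; rewrite eqn_leq; apply/andP; split; apply: dist_le; apply: walk_sym;
 [case: (dist_walk y x) | case: (dist_walk x y)] => //.
Qed.

Lemma dist0 x y : (d x y == 0) = (x == y).
Proof.
apply/eqP/eqP => [h|->].
  by have [_ /walknP[p [sp _ lp]]] := dist_walk x y; move: sp lp; rewrite h; case: p.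
apply/eqP; rewrite -leqn0; apply: dist_le; apply/walknP; by exists [::].
Qed.

Lemma distxx x : d x x = 0.
Proof. by apply/eqP; rewrite dist0. Qed.

Lemma dist_edge x y : e x y -> d x y = 1.
Proof.
move=> exy; apply/eqP; rewrite eqn_leq; apply/andP; split.
  by apply: dist_le; apply/walknP; exists [:: y]; rewrite /= exy.
rewrite lt0n dist0; apply/eqP => h; by rewrite h e_irr in exy.
Qed.

Lemma dist1_edge x y : d x y = 1 -> e x y.
Proof.
move=> h; have [_ /walknP[p [sp pp lp]]] := dist_walk x y; move: sp pp lp; rewrite h.
by case: p => [|a [|]] //= _; rewrite andbT => ? <-.
Qed.

Lemma dist_step x y : x != y -> exists m, e x m /\ (d m y).+1 = d x y.
Proof.
move=> nxy; have [_ /walknP[p [sp pp lp]]] := dist_walk x y.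
case: p sp pp lp => [|m p] /=; first by move=> _ _ lp; move: nxy; rewrite lp eqxx.
move=> sp /andP[exm pp] lp; exists m; split => //.
apply/eqP; rewrite eqn_leq; apply/andP; split.
  by rewrite -sp ltnS; apply: dist_le; apply/walknP; exists p.
by rewrite (leq_trans (dist_tri x m y)) // dist_edge.
Qed.

Lemma step_uniq x y m1 m2 : e x m1 -> (d m1 y).+1 = d x y ->
  e x m2 -> (d m2 y).+1 = d x y -> m1 = m2.
Proof.
move=> e1 h1 e2 h2.
have geo m : e x m -> (d m y).+1 = d x y -> exists p, geodesic e x y (m :: p).
  move=> em hm; have [_ /walknP[p [sp pp lp]]] := dist_walk m y.
  by exists p; rewrite /geodesic /= em pp lp sp hm !eqxx.
have [q [_ qu]] := Hgeo x y.
have [p1 g1] := geo _ e1 h1; have [p2 g2] := geo _ e2 h2.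
by have := qu _ g1; rewrite -(qu _ g2) => -[].
Qed.

Definition nxt x y : T := odflt x [pick m | e x m && ((d m y).+1 == d x y)].

Lemma nxtP x y : x != y -> e x (nxt x y) /\ (d (nxt x y) y).+1 = d x y.
Proof.
move=> nxy; rewrite /nxt; case: pickP => [m /andP[? /eqP ?]|h] //=.
have [m [em hm]] := dist_step nxy; by have := h m; rewrite em hm eqxx.
Qed.

Lemma nxt_uniq x y m : e x m -> (d m y).+1 = d x y -> nxt x y = m.
Proof.
move=> em hm; have nxy : x != y.
  by apply/negP => /eqP h; move: hm; rewrite h distxx.
have [e1 h1] := nxtP nxy; exact: step_uniq e1 h1 em hm.
Qed.

Lemma nxt1 x y : d x y = 1 -> nxt x y = y.
Proof. by move=> h; apply: nxt_uniq; rewrite ?distxx ?h // dist1_edge. Qed.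

Lemma nxt_trans a b c : a != b -> d a c = d a b + d b c -> nxt a c = nxt a b.
Proof.
move=> nab h; have [e1 h1] := nxtP nab; apply: nxt_uniq => //.
have t1 := dist_tri (nxt a b) b c; have t2 := dist_tri a (nxt a b) c.
rewrite (dist_edge e1) in t2; lia.
Qed.

Lemma nxt_far a b c : b != c -> d a c = d a b + d b c -> d a (nxt b c) = (d a b).+1.
Proof.
move=> nbc h; have [e1 h1] := nxtP nbc.
have t1 := dist_tri a b (nxt b c); have t2 := dist_tri a (nxt b c) c.
rewrite (dist_edge e1) in t1; lia.
Qed.

Lemma LG a m w : d a m = 1 -> 0 < d m w -> d a (nxt m w) = 2 -> d a w = (d m w).+1.
Proof.
move=> ham; move Hn: (d m w) => n; elim: n m w ham Hn => [|n IH] m w ham Hn // _.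
case: n IH Hn => [|n] IH Hn.
  by rewrite (nxt1 Hn).
move=> h2.
have nmw : m != w by rewrite -dist0 Hn.
have nwm : w != m by rewrite eq_sym.
have [ewv hv] := nxtP nwm.
move: (nxt w m) ewv hv => v ewv hv.
rewrite (dist_sym w m) Hn in hv.
have hmv : d m v = n.+1 by rewrite dist_sym; lia.
have dvw : d v w = 1 by rewrite dist_sym (dist_edge ewv).
have nmv : m != v by rewrite -dist0 hmv.
have eq1 : d m w = d m v + d v w by lia.
have nx : nxt m w = nxt m v := nxt_trans nmv eq1.
have h2' : d a (nxt m v) = 2 by rewrite -nx.
have hav : d a v = n.+2 := IH m v ham hmv (ltn0Sn _) h2'.
have P := Hpto a m v w.
rewrite hav Hn ham dvw hmv in P.
have t := dist_tri a m w; rewrite ham Hn in t.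
nia.
Qed.


Definition cd (s : seq T) := all (fun p => p.1 != p.2) (zip s (behead s)).
Definition lng (s : seq T) := has (fun p => 1 < d p.1 p.2) (zip s (behead s)).

Lemma cd_cons a b r : cd (a :: b :: r) = (a != b) && cd (b :: r).
Proof. by []. Qed.
Lemma lng_cons a b r : lng (a :: b :: r) = (1 < d a b) || lng (b :: r).
Proof. by []. Qed.
Lemma ellS a b w : ell e (a :: b :: w) = d a b + ell e (b :: w).
Proof. by []. Qed.
Lemma ell3 a b c w :
  (ell e (a :: c :: w) == ell e (a :: b :: c :: w)) = (d a c == d a b + d b c).
Proof. by rewrite !ellS addnA eqn_add2r. Qed.

Definition Dsum (g : seq T -> int) (s : seq T) : int :=
  (\sum_(1 <= i < (size s).-1)
     (if ell e (delete i s) == ell e s then (-1) ^+ i * g (delete i s) else 0))%R.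

Lemma DS_rec g a b r :
  Dsum g (a :: b :: r) =
  ((if r is _ :: _ then
     (if ell e (a :: r) == ell e (a :: b :: r) then - g (a :: r) else 0) else 0)
   - Dsum (fun w => g (a :: w)) (b :: r))%R.
Proof.
rewrite /Dsum /=; case: r => [|c r].
  by rewrite !big_geq // subr0.
rewrite big_ltn //= big_add1 /= expr1 mulN1r.
set A := (if _ then _ else _).
congr (A + _)%R; rewrite -sumrN; apply: eq_big_nat => i /andP[hi _].
case: i hi => [|i] // _.
rewrite /delete /= !ellS eqn_add2l.
case: ifP => _; last by rewrite oppr0.
by rewrite exprS mulN1r mulNr.
Qed.

Lemma DS_head g g' c r : (forall w, g (c :: w) = g' (c :: w)) ->
  Dsum g (c :: r) = Dsum g' (c :: r).
Proof.
move=> h; rewrite /Dsum; apply: eq_big_nat => i /andP[hi _].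
by case: i hi => [|i] // _; rewrite /delete /= h.
Qed.

Lemma DS_N g s : Dsum (fun w => - g w)%R s = (- Dsum g s)%R.
Proof.
rewrite /Dsum -sumrN; apply: eq_bigr => i _.
by case: ifP => _; rewrite ?mulrN ?oppr0.
Qed.

Lemma DS_0 s : Dsum (fun _ => 0%R) s = 0%R.
Proof. by rewrite /Dsum big1 // => i _; case: ifP => _; rewrite ?mulr0. Qed.

Fixpoint Hseq (s : seq T) : option (nat * seq T) :=
  match s with
  | a :: ((b :: r) as t) =>
    if 1 < d a b then Some (1, a :: nxt a b :: t)
    else if (match r with c :: _ => d a (nxt b c) == 2 | [::] => false end) then None
    else omap (fun pz => (pz.1.+1, a :: pz.2)) (Hseq t)
  | _ => None
  end.

Lemma Hseq_cons a b r : Hseq (a :: b :: r) =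
    if 1 < d a b then Some (1, a :: nxt a b :: b :: r)
    else if (match r with c :: _ => d a (nxt b c) == 2 | [::] => false end) then None
    else omap (fun pz => (pz.1.+1, a :: pz.2)) (Hseq (b :: r)).
Proof. by []. Qed.

Definition Hop (g : seq T -> int) (s : seq T) : int :=
  if Hseq s is Some (p, z) then ((-1) ^+ p * g z)%R else 0%R.

Lemma HseqA a b w : 1 < d a b -> Hseq (a :: b :: w) = Some (1, a :: nxt a b :: b :: w).
Proof. by move=> h; rewrite /= h. Qed.

Lemma HopA g a b w : 1 < d a b -> Hop g (a :: b :: w) = (- g (a :: nxt a b :: b :: w))%R.
Proof. by move=> h; rewrite /Hop HseqA // expr1 mulN1r. Qed.

Lemma HseqB a b c w : d a b <= 1 -> d a (nxt b c) = 2 -> Hseq (a :: b :: c :: w) = None.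
Proof. by move=> h1 h2; rewrite /= ltnNge h1 /= h2 eqxx. Qed.

Lemma HseqC a b c w : d a b <= 1 -> d a (nxt b c) != 2 ->
  Hseq (a :: b :: c :: w) = omap (fun pz => (pz.1.+1, a :: pz.2)) (Hseq (b :: c :: w)).
Proof. by move=> h1 h2; rewrite [LHS]/= ltnNge h1 /= (negbTE h2). Qed.

Lemma HopC g a b c w : d a b <= 1 -> d a (nxt b c) != 2 ->
  Hop g (a :: b :: c :: w) = (- Hop (fun z => g (a :: z)) (b :: c :: w))%R.
Proof.
move=> h1 h2; rewrite /Hop HseqC //.
case: (Hseq _) => [[p z]|] /=; last by rewrite oppr0.
by rewrite exprS mulN1r mulNr.
Qed.

Lemma HS1 s p z : Hseq s = Some (p, z) ->
  [/\ size z = (size s).+1, ell e z = ell e s, cd s -> cd z &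
      exists a s' z', s = a :: s' /\ z = a :: z'].
Proof.
elim: s p z => [|a t IH] p z //; case: t IH => [|b r] IH //.
rewrite Hseq_cons; case: ifP => hab.
  case=> _ <-.
  have nab : a != b by rewrite -dist0 -lt0n (ltn_trans _ hab).
  have [eam hm] := nxtP nab.
  split => //.
  - by rewrite !ellS (dist_edge eam) addnA add1n hm.
  - rewrite !cd_cons => /andP[_ ->]; rewrite andbT; apply/andP; split.
      by rewrite -dist0 (dist_edge eam).
    by rewrite -dist0; apply/eqP => h; move: hm hab; rewrite h => <-.
  - by exists a, (b :: r), (nxt a b :: b :: r).
case: ifP => _; first by case.
case E: (Hseq (b :: r)) => [[p' z']|] /=; last by case.
case=> _ <-.
have [h1 h2 h3 [b' [s' [z'' [hb hz]]]]] := IH _ _ E.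
move: hz; case: hb => <- _ hz; rewrite hz in h1 h2 h3 *.
split => //.
- by rewrite /= -h1.
- by rewrite !ellS h2.
- by rewrite !cd_cons => /andP[-> /h3].
- by exists a, (b :: r), (b :: z'').
Qed.

Lemma HS2 b c r p z : b != c -> Hseq (b :: c :: r) = Some (p, z) ->
  exists z', z = b :: nxt b c :: z'.
Proof.
move=> nbc; rewrite Hseq_cons; case: ifP => hbc.
  by case=> _ <-; exists (c :: r).
case: ifP => _; first by case.
case E: (Hseq (c :: r)) => [[p' z']|] /=; last by case.
case=> _ <-.
have [_ _ _ [c' [s' [z'' [hc hz]]]]] := HS1 E.
move: hz; case: hc => <- _ ->.
have h1 : d b c = 1.
  by move: hbc nbc; rewrite -dist0; case: (d b c) => [|[|]].
by rewrite (nxt1 h1); exists z''.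
Qed.


Lemma HopB g a b c w : d a b <= 1 -> d a (nxt b c) = 2 -> Hop g (a :: b :: c :: w) = 0%R.
Proof. by move=> h1 h2; rewrite /Hop HseqB. Qed.

Lemma Aeq a b c : 1 < d a b -> b != c ->
  (d (nxt a b) c == d (nxt a b) b + d b c) = (d a c == d a b + d b c).
Proof.
move=> hab nbc.
have nab : a != b by rewrite -dist0 -lt0n (ltn_trans _ hab).
have [eam hm] := nxtP nab.
have ham := dist_edge eam.
move: (nxt a b) eam hm ham => m eam hm ham.
have nmb : m != b by rewrite -dist0; apply/eqP => h; move: hm hab; rewrite h => <-.
have t1 := dist_tri a m c; have t2 := dist_tri m b c.
have dbc : 0 < d b c by rewrite lt0n dist0.
apply/eqP/eqP => h.
  have h2 : d a (nxt m c) = 2.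
    rewrite (nxt_trans nmb h) (nxt_far nmb) ?ham //; lia.
  have dmc : 0 < d m c by lia.
  have := LG ham dmc h2; lia.
lia.
Qed.

Lemma CshiftH f a b c r : d a b = 1 -> d a (nxt b c) != 2 -> b != c ->
  Hop (Dsum f) (a :: b :: c :: r) = Hop (Dsum (fun z => f (a :: z))) (b :: c :: r).
Proof.
move=> h1 h2 nbc; rewrite /Hop HseqC ?h1 //.
case E: (Hseq (b :: c :: r)) => [[p z]|] //=.
have [z' ->] := HS2 nbc E.
have [ebn _] := nxtP nbc.
rewrite DS_rec ell3 h1 (dist_edge ebn) (negbTE h2) sub0r.
by rewrite exprS mulN1r mulNr mulrN opprK.
Qed.

Lemma CshiftD f a b c r : d a b = 1 -> d a (nxt b c) != 2 -> b != c ->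
  Dsum (fun w => Hop f (a :: w)) (b :: c :: r) =
  (- Dsum (Hop (fun z => f (a :: z))) (b :: c :: r))%R.
Proof.
move=> h1 h2 nbc.
have h1' : d a b <= 1 by rewrite h1.
rewrite !DS_rec.
rewrite (DS_head (g' := fun w => - Hop (fun z => f (a :: z)) (b :: w))%R); last first.
  by move=> w /=; rewrite HopC.
rewrite DS_N.
case: r => [|c' r] /=; first by lia.
rewrite ell3; case: ifP => h.
  rewrite HopC //; last by rewrite (nxt_trans nbc (eqP h)).
  lia.
lia.
Qed.

Lemma main s : cd s -> lng s -> forall f, (Hop (Dsum f) s + Dsum (Hop f) s = f s)%R.
Proof.
elim: s => [|a t IH] //; case: t IH => [|b r] IH //.
move=> cds; move: (cds); rewrite cd_cons => /andP[nab cdr] lngs f.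
case: (ltnP 1 (d a b)) => hab.
  have [eam hm] := nxtP nab.
  have ham := dist_edge eam.
  have hc : d a b == d a (nxt a b) + d (nxt a b) b by rewrite ham -hm.
  rewrite HopA // DS_rec ell3 hc.
  rewrite DS_rec [Dsum (Hop f) _]DS_rec.
  rewrite (DS_head (g := fun w => Hop f (a :: w)) (g' := fun w => - f (a :: nxt a b :: w))%R); last first.
    by move=> w /=; rewrite HopA.
  rewrite DS_N.
  case: r cdr {lngs cds IH} => [|c r] cdr; first by lia.
  have nbc : b != c by move: cdr; rewrite cd_cons => /andP[].
  rewrite !ell3 (Aeq hab nbc).
  case: ifP => h; last by lia.
  rewrite HopA; last by rewrite (eqP h); apply: (leq_trans hab); apply: leq_addr.
  rewrite (nxt_trans nab (eqP h)).
  lia.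
have hab1 : d a b = 1.
  by move: hab nab; rewrite -dist0; case: (d a b) => [|[|]].
case: r cdr lngs {cds} IH => [|c r] cdr lngs IH.
  by move: lngs; rewrite lng_cons hab1.
have nbc : b != c by move: cdr; rewrite cd_cons => /andP[].
have dbc : 0 < d b c by rewrite lt0n dist0.
case: (eqVneq (d a (nxt b c)) 2) => h2.
  rewrite HopB // add0r DS_rec.
  have hac : d a c = d a b + d b c by rewrite hab1 (LG hab1 dbc h2).
  rewrite ell3 hac eqxx.
  rewrite HopA; last by lia.
  rewrite (nxt_trans nab hac) (nxt1 hab1).
  rewrite DS_rec (DS_head (g' := fun _ => 0%R)) ?DS_0; last first.
    by move=> w /=; rewrite HopB.
  case: r {cdr lngs IH} => [|c' r] /=; first by lia.
  rewrite ell3; case: ifP => h; last by lia.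
  rewrite HopB //; last by rewrite (nxt_trans nbc (eqP h)).
  lia.
have lng' : lng (b :: c :: r) by move: lngs; rewrite lng_cons hab1.
have IH' := IH cdr lng' (fun z => f (a :: z)).
rewrite CshiftH // DS_rec ell3.
have -> : (d a c == d a b + d b c) = false.
  apply/negP => /eqP h; move: h2; by rewrite (nxt_far nbc h) hab1.
rewrite CshiftD //.
lia.
Qed.


Lemma cd_ell s : cd s -> (size s).-1 <= ell e s.
Proof.
elim: s => [|a [|b r] IH] //= h.
move: h; rewrite cd_cons => /andP[nab h].
rewrite ellS; have := IH h; have : 0 < d a b by rewrite lt0n dist0.
simpl; lia.
Qed.

Lemma nolng_ell s : ~~ lng s -> ell e s <= (size s).-1.
Proof.
elim: s => [|a [|b r] IH] //= h.
move: h; rewrite lng_cons negb_or => /andP[hab h].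
rewrite ellS; have := IH h; rewrite -leqNgt in hab.
simpl; lia.
Qed.

Lemma SUMT n (s : seq T) (G : seq T -> int) : size s = n ->
  (\sum_(w : n.-tuple T) ((tval w == s)%:R * G (tval w)) = G s)%R.
Proof.
move=> hs; have sz : size s == n by rewrite hs.
rewrite (bigD1 (Tuple sz)) //= eqxx mul1r big1 ?addr0 // => w hw.
case: eqP => h; last by rewrite mul0r.
have ew : w = Tuple sz by apply: val_inj.
by rewrite ew eqxx in hw.
Qed.

Lemma size_delete i (s : seq T) : i < size s -> size (delete i s) = (size s).-1.
Proof.
move=> hi; rewrite /delete size_cat size_take size_drop hi; lia.
Qed.

Lemma FCsum k (x : k.+1.-tuple T) (g : seq T -> int) :
  (\sum_(w : k.-tuple T) face_coef e x w * g (tval w) = Dsum g (tval x))%R.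
Proof.
rewrite /face_coef.
under eq_bigr do rewrite mulr_suml.
rewrite exchange_big /Dsum size_tuple /=.
apply: eq_big_nat => i /andP[hi1 hi2].
case: ifP => hsm.
  under eq_bigr => w _.
    rewrite andbT (_ : _ * _ = (tval w == delete i x)%:R * ((-1) ^+ i * g (tval w)))%R;
      last by rewrite eq_sym; case: eqP => _; rewrite ?mul1r ?mul0r.
    over.
  rewrite /= (@SUMT k (delete i x) (fun w => ((-1) ^+ i * g w)%R)) // size_delete size_tuple //; lia.
by rewrite big1 // => w _; rewrite andbF mul0r.
Qed.

Lemma FCeq k (z : k.+1.-tuple T) (y : k.-tuple T) :
  face_coef e z y = Dsum (fun w => (w == tval y)%:R%R) (tval z).
Proof.
rewrite /face_coef /Dsum size_tuple /=; apply: eq_bigr => i _.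
by case: (delete _ _ == _); case: (ell _ _ == _); rewrite /= ?mulr1 ?mulr0.
Qed.

Lemma HopSum k (s : seq T) (G : seq T -> int) : size s = k.+1 ->
  (\sum_(z : k.+2.-tuple T) Hop (fun w => (w == tval z)%:R%R) s * G (tval z) = Hop G s)%R.
Proof.
move=> hs; rewrite /Hop; case E: (Hseq s) => [[p z0]|]; last first.
  by rewrite big1 // => z _; rewrite mul0r.
have [h1 _ _ _] := HS1 E.
under eq_bigr => z _.
  rewrite -mulrA (_ : (z0 == tval z)%:R * G (tval z) = (tval z == z0)%:R * G (tval z))%R;
    last by rewrite eq_sym.
  over.
by rewrite -mulr_sumr SUMT // h1 hs.
Qed.

Definition Hc k (c : {ffun k.+1.-tuple T -> int}) : {ffun k.+2.-tuple T -> int} :=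
  [ffun z => \sum_x c x * Hop (fun w => (w == tval z)%:R%R) (tval x)]%R.

Lemma BD k (c : {ffun k.+1.-tuple T -> int}) (g : seq T -> int) :
  (\sum_(w : k.-tuple T) bd e c w * g (tval w) = \sum_x c x * Dsum g (tval x))%R.
Proof.
under eq_bigr do rewrite ffunE mulr_suml.
rewrite exchange_big; apply: eq_bigr => x _.
by rewrite -FCsum mulr_sumr; apply: eq_bigr => w _; rewrite mulrA.
Qed.

Lemma bdHc k (c : {ffun k.+1.-tuple T -> int}) (y : k.+1.-tuple T) :
  bd e (Hc c) y = (\sum_x c x * Hop (Dsum (fun w => (w == tval y)%:R%R)) (tval x))%R.
Proof.
rewrite ffunE.
under eq_bigr do rewrite ffunE FCeq mulr_suml.
rewrite exchange_big; apply: eq_bigr => x _.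
by rewrite -(HopSum _ (size_tuple x)) mulr_sumr; apply: eq_bigr => z _; rewrite mulrA.
Qed.

Lemma sum_delta k (c : {ffun k.+1.-tuple T -> int}) (y : k.+1.-tuple T) :
  (\sum_x c x * (tval x == tval y)%:R)%R = c y.
Proof.
rewrite (bigD1 y) //= eqxx mulr1 big1 ?addr0 // => x hx.
by rewrite (_ : (tval x == tval y) = false) ?mulr0 //; apply/negbTE.
Qed.

End Metric.

Theorem theoremB3 (T : finType) (e : rel T)
  (e_sym : symmetric e) (e_irr : irreflexive e)
  (e_conn : forall x y : T, connect e x y)
  (Hgeo : geodetic e) (Hpto : ptolemaic e) :
  diagonal e.
Proof.
move=> k l nkl c hc bdc.
case: (ltngtP k l) => hkl; last by rewrite hkl eqxx in nkl.
- exists (Hc e c); split.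
    move=> z; rewrite ffunE => hz.
    have /existsP [x hx] : [exists x, (c x * Hop e (fun w => (w == tval z)%:R%R) (tval x) != 0)%R].
      move: hz; apply: contraR => /existsPn hn.
      by apply/eqP; apply: big1 => x _; apply/eqP; move: (hn x); rewrite negbK.
    have cx : c x != 0%R by apply: contraNneq hx => ->; rewrite mul0r.
    move: hx; rewrite /Hop; case E: (Hseq e (tval x)) => [[p z0]|]; last by rewrite mulr0 eqxx.
    case: (eqVneq z0 (tval z)) => [hz0|nz]; last by rewrite /= mulr0n !mulr0 eqxx.
    move=> _; have [_ h2 h3 _] := HS1 e_irr e_conn E.
    move: (hc x cx); rewrite /inI => /andP[hcd /eqP hl].
    by rewrite /inI -hz0 h2 hl eqxx andbT; exact: h3 hcd.
  apply/ffunP => y; rewrite (bdHc e_irr e_conn).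
  have := @BD T e k c (Hop e (fun w => (w == tval y)%:R%R)).
  rewrite bdc.
  rewrite big1; last by move=> w _; rewrite ffunE mul0r.
  move=> /esym h0.
  rewrite -[RHS]sum_delta.
  transitivity (\sum_x c x * Hop e (Dsum e (fun w => (w == tval y)%:R%R)) (tval x)
     + \sum_x c x * Dsum e (Hop e (fun w => (w == tval y)%:R%R)) (tval x))%R.
    by rewrite h0 addr0.
  rewrite -big_split; apply: eq_bigr => x _ /=.
  rewrite -mulrDr.
  have [->|cx] := eqVneq (c x) 0%R; first by rewrite !mul0r.
  have := hc x cx; rewrite /inI => /andP[hcd /eqP hl].
  have hlng : lng e (tval x).
    apply: contraLR hkl; rewrite -leqNgt => /nolng_ell; rewrite size_tuple hl //.
  by rewrite (main e_sym e_irr e_conn Hgeo Hpto hcd hlng).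
- have c0 : forall x, c x = 0%R.
    move=> x; apply/eqP; apply/negPn/negP => cx.
    have := hc x cx; rewrite /inI => /andP[hcd /eqP hl].
    have := cd_ell e_conn hcd; rewrite size_tuple hl /=; lia.
  exists 0%R; split.
    by move=> x; rewrite ffunE eqxx.
  apply/ffunP => y; rewrite !ffunE c0 big1 // => x _; by rewrite ffunE mul0r.
Qed.
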